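(* Let $y_0\in Y$ satisfy $d^*(y_0)=k^*(y_0)$. - If $V_T(\cdot)$ is continuous on $Y$ for every integer $T>1$, then the limit $\lim_{T\to\infty}V_T(y_0)$ exists and equals $d^*(y_0)$. - If $h_\alpha(\cdot)$ is continuous on $Y$ for every $\alpha\in(0,1)$, then the limit $\lim_{\alpha\uparrow1}h_\alpha(y_0)$ exists and equals $d^*(y_0)$.
   Context: Let $Y\subset\mathbb{R}^m$ be nonempty compact, $U_0$ a compact metric space, $U(\cdot):Y\rightsquigarrow U_0$ upper semicontinuous and compact-valued, and $f:\mathbb{R}^m\times U_0\to\mathbb{R}^m$, $k:\mathbb{R}^m\times U_0\to\mathbb{R}$ continuous. Put $A(y):=\{u\in U(y): f(y,u)\in Y\}$ and $G:=\{(y,u):y\in Y,\ u\in A(y)\}$. Standing assumption: $A(y)\ne\emptyset$ for all $y\in Y$. For $y_0\in Y$, an admissible process on $\{0,\dots,T-1\}$ (respectively on $\{0,1,\dots\}$) is a pair $(y(t),u(t))$ with $y(0)=y_0$, $u(t)\in A(y(t))$ and $y(t+1)=f(y(t),u(t))$. The controls form $\mathcal U_T(y_0)$ (respectively $\mathcal U(y_0)$). Value functions: $$V_T(y_0):=\frac1T\min_{u\in\mathcal U_T(y_0)}\sum_{t=0}^{T-1}k(y(t),u(t)),\qquad h_\alpha(y_0):=(1-\alpha)\min_{u\in\mathcal U(y_0)}\sum_{t=0}^\infty\alpha^tk(y(t),u(t)).$$ LP value: - $\mathcal P(G)$ denotes the Borel probability measures on $G$ and $\mathcal M_+(G)$ the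 finite nonnegative Borel measures on $G$. - $W:=\{\gamma\in\mathcal P(G):\int_G(\varphi(f(y,u))-\varphi(y))\,d\gamma=0\ \forall\varphi\in C(Y)\}$. - $k^*(y_0)$ is the infimum of $\int_Gk\,d\gamma$ over pairs $(\gamma,\xi)\in\mathcal P(G)\times\mathcal M_+(G)$ with $\gamma\in W$ and $\int_G(\varphi(y_0)-\varphi(y))\,d\gamma+\int_G(\varphi(f(y,u))-\varphi(y))\,d\xi=0$ for all $\varphi\in C(Y)$. Dual value: $d^*(y_0):=\sup\mu$, where the supremum is over triples $(\mu,\psi,\eta)\in\mathbb{R}\times C(Y)\times C(Y)$ with, for all $(y,u)\in G$: $$k(y,u)+\psi(y_0)-\psi(y)+\eta(f(y,u))-\eta(y)-\mu\ge0,\qquad\psi(f(y,u))-\psi(y)\ge0.$$ *)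

(* Defs.v *)
From HB Require Import structures.
From mathcomp Require Import all_boot all_order all_algebra.
From mathcomp Require Import all_classical all_reals all_analysis.
Set Implicit Arguments. Unset Strict Implicit. Unset Printing Implicit Defensive.
Import Order.TTheory GRing.Theory Num.Theory.
Import numFieldNormedType.Exports.
Local Open Scope classical_set_scope.
Local Open Scope ring_scope.

(* pointed metric spaces (U0 is nonempty under the standing assumptions) *)
#[short(type="pmetricType")]
HB.structure Definition PMetric (K : numDomainType) :=
  { M of Metric K M & isPointed M }.

Section OCP.
Context {R : realType} {m : nat} {U0 : pmetricType R}.

Local Notation Sp := ('rV[R]_m * U0)%type.
Local Notation BorSp := (g_sigma_algebraType (@open Sp)).

Definition usc_on (Y : set 'rV[R]_m) (U : 'rV[R]_m -> set U0) :=
  forall y, Y y -> forall O : set U0, open O -> U y `<=` O ->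
    \forall y' \near y, Y y' -> U y' `<=` O.

Variables (Y : set 'rV[R]_m) (U : 'rV[R]_m -> set U0)
  (f : Sp -> 'rV[R]_m) (k : Sp -> R).

Definition Aset (y : 'rV[R]_m) : set U0 := [set u | U y u /\ Y (f (y, u))].

Definition Gset : set Sp := [set p | Y p.1 /\ Aset p.1 p.2].

Definition admissibleT (T : nat) (y0 : 'rV[R]_m)
    (y : nat -> 'rV[R]_m) (u : nat -> U0) :=
  y 0%N = y0 /\ forall t, (t < T)%N -> Aset (y t) (u t) /\ y t.+1 = f (y t, u t).

Definition admissible (y0 : 'rV[R]_m) (y : nat -> 'rV[R]_m) (u : nat -> U0) :=
  y 0%N = y0 /\ forall t, Aset (y t) (u t) /\ y t.+1 = f (y t, u t).

Definition V (T : nat) (y0 : 'rV[R]_m) : R :=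
  T%:R^-1 * inf [set c | exists y u, admissibleT T y0 y u /\
                         c = \sum_(0 <= t < T) k (y t, u t)].

Definition h (alpha : R) (y0 : 'rV[R]_m) : R :=
  (1 - alpha) * inf [set c | exists y u, admissible y0 y u /\
     c = limn (fun n => \sum_(0 <= t < n) alpha ^+ t * k (y t, u t))].

(* C(Y): functions continuous on Y (only their values on Y matter) *)
Definition contY (phi : 'rV[R]_m -> R) := {within Y, continuous phi}.

(* gamma in P(G): Borel probability measure concentrated on G *)
Definition prob_on_G (g : {measure set BorSp -> \bar R}) :=
  g [set: BorSp] = 1%E /\ g (~` (Gset : set BorSp)) = 0%E.

(* xi in M_+(G): finite nonnegative Borel measure concentrated on G *)
Definition finmeas_on_G (xi : {measure set BorSp -> \bar R}) :=
  (xi [set: BorSp] < +oo)%E /\ xi (~` (Gset : set BorSp)) = 0%E.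

Definition inW (g : {measure set BorSp -> \bar R}) :=
  prob_on_G g /\
  forall phi, contY phi ->
    (\int[g]_(p in (Gset : set BorSp)) (phi (f p) - phi p.1)%:E = 0)%E.

(* feasible pairs of the LP defining k*(y0) *)
Definition LPfeasible (y0 : 'rV[R]_m) (g xi : {measure set BorSp -> \bar R}) :=
  inW g /\ finmeas_on_G xi /\
  forall phi, contY phi ->
    (\int[g]_(p in (Gset : set BorSp)) (phi y0 - phi p.1)%:E
     + \int[xi]_(p in (Gset : set BorSp)) (phi (f p) - phi p.1)%:E = 0)%E.

Definition k_star (y0 : 'rV[R]_m) : \bar R :=
  ereal_inf [set (\int[g]_(p in (Gset : set BorSp)) (k p)%:E)%E |
             g in [set g | exists xi, LPfeasible y0 g xi]].

Definition d_star (y0 : 'rV[R]_m) : \bar R :=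
  ereal_sup [set mu%:E | mu in [set mu : R | exists psi eta,
     contY psi /\ contY eta /\
     forall p, Gset p ->
       0 <= k p + psi y0 - psi p.1 + eta (f p) - eta p.1 - mu /\
       0 <= psi (f p) - psi p.1]].

End OCP.

(* Main.v *)
Require Import Defs.
From HB Require Import structures.
From mathcomp Require Import all_boot all_order all_algebra.
From mathcomp Require Import all_classical all_reals all_analysis.
From mathcomp Require Import ring lra.
Set Implicit Arguments. Unset Strict Implicit. Unset Printing Implicit Defensive.
Import Order.TTheory GRing.Theory Num.Theory.
Import numFieldNormedType.Exports.
Local Open Scope classical_set_scope.
Local Open Scope ring_scope.

Lemma final_est (R : realType) (T r V mu I eps M C : R) : 0 < T -> 0 < eps -> 0 <= M ->
  -(2 * M) <= T*(V - mu) -> T*(V - I) <= C -> r - eps/2 < mu -> I < r + eps/2 ->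
  4 * M + 2 * `|C| <= eps*T -> `|r - V| <= eps.
Proof.
move=> T0 e0 M0 h1 h2 h3 h4 h5.
have hC : C <= `|C| := ler_norm C.
have hC0 : 0 <= `|C| := normr_ge0 C.
rewrite ler_norml; apply/andP; split.
  rewrite -(ler_pM2l T0). nra.
have h6 : T * (r - eps/2) <= T * mu by rewrite ler_pM2l //; exact: ltW.
rewrite -(ler_pM2l T0). nra.
Qed.

Lemma final_est2 (R : realType) (s r V mu I eps M C : R) : 0 < s -> 0 < eps -> 0 <= M ->
  mu - 2%:R * M * s <= V -> V - I <= s * C -> r - eps/2 < mu -> I < r + eps/2 ->
  s * (4 * M + 2 * `|C|) <= eps -> `|r - V| <= eps.
Proof.
move=> s0 e0 M0 h1 h2 h3 h4 h5.
have hC : C <= `|C| := ler_norm C.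
have hC0 : 0 <= `|C| := normr_ge0 C.
have h6 : s * C <= s * `|C| by rewrite ler_pM2l.
rewrite ler_norml; apply/andP; split; nra.
Qed.

Section Series.
Context {R : realType}.
Variable al : R.
Hypothesis al0 : 0 <= al.
Hypothesis al1 : al < 1.

Definition Pser (x : nat -> R) n := \sum_(0 <= t < n) al ^+ t * x t.

Lemma geo_le n : \sum_(0 <= t < n) al ^+ t <= (1 - al)^-1.
Proof.
have a1 : 0 < 1 - al by rewrite subr_gt0.
elim: n => [|n IH]; first by rewrite big_geq // invr_ge0 ltW.
rewrite big_nat_recl // expr0.
under eq_bigr do rewrite exprS.
rewrite -mulr_sumr.
have e : 1 + al * (1 - al)^-1 = (1 - al)^-1 by field; rewrite gt_eqF.
by rewrite -[X in _ <= X]e lerD2l ler_wpM2l.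
Qed.

Lemma Pser_bnd x B n : (forall t, `|x t| <= B) -> `|Pser x n| <= B / (1 - al).
Proof.
move=> hB; have B0 : 0 <= B by exact: le_trans (normr_ge0 _) (hB 0%N).
apply: le_trans (ler_norm_sum _ _ _) _.
apply: le_trans (_ : \sum_(0 <= t < n) B * al ^+ t <= _).
  apply: ler_sum => t _; rewrite normrM ger0_norm ?exprn_ge0 // mulrC.
  by rewrite ler_wpM2r ?exprn_ge0.
by rewrite -mulr_sumr; apply: ler_wpM2l => //; exact: geo_le.
Qed.

Lemma Pser_cvg x B : (forall t, `|x t| <= B) -> cvgn (Pser x).
Proof.
move=> hB; have B0 : 0 <= B by exact: le_trans (normr_ge0 _) (hB 0%N).
have ha : `|al| < 1 by rewrite ger0_norm.
apply: normed_cvg.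
apply: (series_le_cvg (v_ := geometric B al)).
- by move=> t; exact: normr_ge0.
- by move=> t; rewrite /geometric /= mulr_ge0 ?exprn_ge0.
- move=> t; rewrite /geometric /= normrM ger0_norm ?exprn_ge0 // mulrC.
  by rewrite ler_wpM2r ?exprn_ge0.
- exact: is_cvg_geometric_series.
Qed.

Definition Lser x := limn (Pser x).

Lemma Lser_bnd x B : (forall t, `|x t| <= B) -> `|Lser x| <= B / (1 - al).
Proof.
move=> hB; have hc := Pser_cvg hB.
rewrite ler_norml; apply/andP; split.
  apply: limr_ge => //; near=> n.
  by have := Pser_bnd n hB; rewrite ler_norml => /andP[].
apply: limr_le => //; near=> n.
by have := Pser_bnd n hB; rewrite ler_norml => /andP[].
Unshelve. all: by end_near.
Qed.

Lemma PserS x n : Pser x n.+1 = x 0%N + al * Pser (fun t => x t.+1) n.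
Proof.
rewrite /Pser big_nat_recl // expr0 mul1r; congr (_ + _).
rewrite mulr_sumr; apply: eq_bigr => t _; by rewrite exprS mulrA.
Qed.

Lemma Lser_shift x B : (forall t, `|x t| <= B) ->
  Lser x = x 0%N + al * Lser (fun t => x t.+1).
Proof.
move=> hB; have hc : cvgn (Pser (fun t => x t.+1)) by exact: (Pser_cvg (B := B)).
have h2 : (fun n => x 0%N + al * Pser (fun t => x t.+1) n) @ \oo -->
    x 0%N + al * Lser (fun t => x t.+1).
  by apply: cvgD; [exact: cvg_cst|apply: cvgMr; exact: hc].
have h3 : Pser x @ \oo --> x 0%N + al * Lser (fun t => x t.+1).
  rewrite -cvg_shiftS; apply: cvg_trans h2; apply: near_eq_cvg; near=> n.
  by rewrite /= PserS.
by rewrite /Lser (cvg_lim _ h3).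
Unshelve. all: by end_near.
Qed.

Lemma Lser_le x y Bx By : (forall t, `|x t| <= Bx) -> (forall t, `|y t| <= By) ->
  (forall t, x t <= y t) -> Lser x <= Lser y.
Proof.
move=> hx hy hxy; apply: ler_lim; [exact: Pser_cvg hx|exact: Pser_cvg hy|].
near=> n; apply: ler_sum => t _; rewrite ler_wpM2l ?exprn_ge0 //.
Unshelve. all: by end_near.
Qed.

Lemma Pser_cst mu : Pser (fun _ => mu) @ \oo --> mu / (1 - al).
Proof.
have ha : `|al| < 1 by rewrite ger0_norm.
have -> : Pser (fun _ => mu) = series (geometric mu al).
  by apply/funext => n; rewrite /Pser /series /=; apply: eq_bigr => t _; rewrite mulrC.
exact: cvg_geometric_series.
Qed.

Lemma Lser_comb mu z B : (forall t, `|z t| <= B) ->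
  Lser (fun t => mu + (z t - z t.+1)) = mu / (1 - al) + (Lser z - Lser (fun t => z t.+1)).
Proof.
move=> hB; apply: cvg_lim => //.
have -> : Pser (fun t => mu + (z t - z t.+1)) =
    (fun n => Pser (fun _ => mu) n + (Pser z n - Pser (fun t => z t.+1) n)).
  apply/funext => n; rewrite /Pser -sumrB -big_split /=.
  by apply: eq_bigr => t _; rewrite mulrDr mulrBr.
apply: cvgD; first exact: Pser_cst.
by apply: cvgB; [exact: (Pser_cvg hB)|exact: (Pser_cvg (B := B))].
Qed.

End Series.
Section Main.
Context {R : realType} {m : nat} {U0 : pmetricType R}.
Variables (Y : set 'rV[R]_m) (U : 'rV[R]_m -> set U0)
  (f : ('rV[R]_m * U0)%type -> 'rV[R]_m) (k : ('rV[R]_m * U0)%type -> R).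
Hypothesis cY : compact Y.
Hypothesis cU0 : compact [set: U0].
Hypothesis usc : usc_on Y U.
Hypothesis cUy : forall y, Y y -> compact (U y).
Hypothesis cf : continuous f.
Hypothesis ck : continuous k.
Hypothesis Ane : forall y, Y y -> Aset Y U f y !=set0.

Local Notation A := (Aset Y U f).
Local Notation G := (Gset Y U f).

Lemma exK : exists K, 0 <= K /\ forall p, Y p.1 -> `|k p| <= K.
Proof.
have cYU : compact (Y `*` [set: U0]) by exact: compact_setX.
have := @continuous_compact _ _ k _ (continuous_subspaceT ck) cYU.
move=> /compact_bounded [M [_ HM]].
exists (`|M| + 1); split; first by rewrite addr_ge0.
move=> p Yp; apply: (HM (`|M| + 1)); first by rewrite (le_lt_trans (ler_norm M))// ltrDl.
by exists p.
Qed.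

Lemma choiceA : exists a : 'rV[R]_m -> U0, forall y, Y y -> A y (a y).
Proof.
have : forall y, exists u : U0, Y y -> A y u.
  move=> y; have [Yy|nYy] := pselect (Y y).
    by have [u Au] := Ane Yy; exists u.
  by exists point.
by move=> /boolp.choice [a Ha]; exists a.
Qed.

Lemma exists_adm y0 : Y y0 -> exists y u, admissible Y U f y0 y u.
Proof.
move=> Y0; have [a Ha] := choiceA.
pose y t := iter t (fun z => f (z, a z)) y0.
have Yy t : Y (y t).
  elim: t => [//|t IH]; rewrite /y iterS; exact: (Ha _ IH).2.
exists y, (fun t => a (y t)); split => // t; split; first exact: Ha.
by rewrite /y iterS.
Qed.

Lemma adm_admT y0 y u T : admissible Y U f y0 y u -> admissibleT Y U f T y0 y u.
Proof. by move=> [h0 h]; split => // t _; exact: h. Qed.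

Lemma admT_Y T y0 y u : Y y0 -> admissibleT Y U f T y0 y u ->
  forall t, (t <= T)%N -> Y (y t).
Proof.
move=> Y0 [h0 h]; elim => [|t IH] tT; first by rewrite h0.
have [[_ Yf] ->] := h t tT; exact: Yf.
Qed.

Lemma admT_G T y0 y u : Y y0 -> admissibleT Y U f T y0 y u ->
  forall t, (t < T)%N -> G (y t, u t).
Proof.
move=> Y0 adm t tT; split; first exact: (admT_Y Y0 adm (ltnW tT)).
by have [h0 h] := adm; exact: (h t tT).1.
Qed.

Lemma adm_Y y0 y u : Y y0 -> admissible Y U f y0 y u -> forall t, Y (y t).
Proof.
move=> Y0 adm t; exact: (admT_Y (T := t) Y0 (adm_admT t adm) (leqnn t)).
Qed.

Lemma adm_G y0 y u : Y y0 -> admissible Y U f y0 y u -> forall t, G (y t, u t).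
Proof.
move=> Y0 adm t; exact: (admT_G (T := t.+1) Y0 (adm_admT _ adm) (ltnSn t)).
Qed.


Variable K : R.
Hypothesis hK0 : 0 <= K.
Hypothesis hK : forall p, Y p.1 -> `|k p| <= K.

Lemma kG_le p : G p -> k p <= K.
Proof. by move=> [Yp _]; exact: le_trans (ler_norm _) (hK Yp). Qed.
Lemma kG_ge p : G p -> - K <= k p.
Proof.
move=> [Yp _]; rewrite lerNl; apply: le_trans (hK Yp).
by rewrite -normrN ler_norm.
Qed.

Definition ST T y0 := [set c | exists y u, admissibleT Y U f T y0 y u /\
   c = \sum_(0 <= t < T) k (y t, u t)].
Definition W T y0 := inf (ST T y0).

Lemma ST_ne T y0 : Y y0 -> ST T y0 !=set0.
Proof.
move=> Y0; have [y [u adm]] := exists_adm Y0.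
by exists (\sum_(0 <= t < T) k (y t, u t)), y, u; split => //; exact: adm_admT.
Qed.

Lemma ST_bnd T y0 c : Y y0 -> ST T y0 c -> - (T%:R * K) <= c <= T%:R * K.
Proof.
move=> Y0 [y [u [adm ->]]]; apply/andP; split.
  have -> : -(T%:R * K) = \sum_(0 <= t < T) (- K).
    by rewrite sumr_const_nat subn0 mulr_natl mulNrn.
  apply: ler_sum_nat => t /andP[_ tT].
  exact/kG_ge/(admT_G Y0 adm).
have -> : T%:R * K = \sum_(0 <= t < T) K.
  by rewrite sumr_const_nat subn0 mulr_natl.
apply: ler_sum_nat => t /andP[_ tT]; exact/kG_le/(admT_G Y0 adm).
Qed.

Lemma W_le T y0 c : Y y0 -> ST T y0 c -> W T y0 <= c.
Proof.
move=> Y0 Sc; apply: ge_inf => //; exists (- (T%:R * K)) => x Sx.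
by have /andP[] := ST_bnd Y0 Sx.
Qed.

Lemma W_ge T y0 x : Y y0 -> (forall c, ST T y0 c -> x <= c) -> x <= W T y0.
Proof. by move=> Y0 h; apply: lb_le_inf; [exact: ST_ne|exact: h]. Qed.

Lemma W_bnd T y0 : Y y0 -> `|W T y0| <= T%:R * K.
Proof.
move=> Y0; rewrite ler_norml; apply/andP; split.
  by apply: W_ge => // c Sc; have /andP[] := ST_bnd Y0 Sc.
have [c Sc] := ST_ne T Y0; apply: le_trans (W_le Y0 Sc) _.
by have /andP[] := ST_bnd Y0 Sc.
Qed.

Lemma W_DP T y u : G (y, u) -> W T.+1 y <= k (y, u) + W T (f (y, u)).
Proof.
move=> Gp; have [Yy [Ayu Yf]] := Gp.
rewrite -lerBlDl; apply: W_ge => // c [z [v [[z0 adm] ->]]].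
rewrite lerBlDl.
pose y' t := if t is t'.+1 then z t' else y.
pose u' t := if t is t'.+1 then v t' else u.
have adm' : admissibleT Y U f T.+1 y y' u'.
  split => // -[|t] tT /=; first by rewrite z0.
  exact: adm.
apply: le_trans (W_le Yy (_ : ST T.+1 y _)) _.
  by exists y', u'; split; first exact: adm'.
by rewrite big_nat_recl.
Qed.

Lemma W_trunc T z : Y z -> W T z <= W T.+1 z + K.
Proof.
move=> Yz; rewrite -lerBlDr; apply: W_ge => // c [y [u [adm ->]]].
rewrite lerBlDr.
have admT : admissibleT Y U f T z y u.
  by case: adm => h0 h; split => // t tT; apply: h; exact: ltnW.
apply: le_trans (W_le Yz (_ : ST T z _)) _.
  by exists y, u; split; first exact: admT.
rewrite big_nat_recr //= -addrA lerDl -lerBlDr sub0r; exact/kG_ge/(admT_G Yz adm).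
Qed.

Lemma V_W T y : (0 < T)%N -> T%:R * V Y U f k T y = W T y.
Proof. by move=> T0; rewrite /V mulrA divff ?mul1r // pnatr_eq0 -lt0n. Qed.


Definition dualfeas (y0 : 'rV[R]_m) (mu : R) (psi eta : 'rV[R]_m -> R) :=
  forall p, G p ->
       0 <= k p + psi y0 - psi p.1 + eta (f p) - eta p.1 - mu /\
       0 <= psi (f p) - psi p.1.

Lemma psi_mono T y0 y u mu psi eta : Y y0 -> dualfeas y0 mu psi eta ->
  admissibleT Y U f T y0 y u -> forall t, (t <= T)%N -> psi y0 <= psi (y t).
Proof.
move=> Y0 df adm; elim => [|t IH] tT; first by case: adm => ->.
apply: le_trans (IH (ltnW tT)) _.
have Gt := admT_G Y0 adm tT; have [_ hdf] := df _ Gt.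
have [_ h] := adm; rewrite (h t tT).2; by rewrite -subr_ge0.
Qed.

Lemma dual_step T y0 y u mu psi eta : Y y0 -> dualfeas y0 mu psi eta ->
  admissibleT Y U f T y0 y u -> forall t, (t < T)%N ->
  mu + (eta (y t) - eta (y t.+1)) <= k (y t, u t).
Proof.
move=> Y0 df adm t tT.
have Gt := admT_G Y0 adm tT; have [h1 _] := df _ Gt.
have hp := psi_mono Y0 df adm (ltnW tT).
have [_ h] := adm; move: h1; rewrite /= -(h t tT).2 => h1.
rewrite -subr_ge0; apply: le_trans h1 _.
rewrite -subr_ge0.
have -> : k (y t, u t) - (mu + (eta (y t) - eta (y t.+1))) -
  (k (y t, u t) + psi y0 - psi (y t) + eta (y t.+1) - eta (y t) - mu) =
  psi (y t) - psi y0 by ring.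
by rewrite subr_ge0.
Qed.

Lemma dual_sum T y0 y u mu psi eta (M : R) : Y y0 -> dualfeas y0 mu psi eta ->
  (forall z, Y z -> `|eta z| <= M) ->
  admissibleT Y U f T y0 y u ->
  T%:R * mu - 2%:R * M <= \sum_(0 <= t < T) k (y t, u t).
Proof.
move=> Y0 df hM adm.
have hs : \sum_(0 <= t < T) (mu + (eta (y t) - eta (y t.+1))) <=
    \sum_(0 <= t < T) k (y t, u t).
  by apply: ler_sum_nat => t /andP[_ tT]; exact: dual_step Y0 df adm t tT.
apply: le_trans hs.
rewrite big_split /= sumr_const_nat subn0 mulr_natl lerD2l.
have -> : \sum_(0 <= i < T) (eta (y i) - eta (y i.+1)) =
   - \sum_(0 <= i < T) (eta (y i.+1) - eta (y i)).
  by rewrite -sumrN; apply: eq_bigr => i _; rewrite opprB.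
rewrite telescope_sumr // lerNl opprK.
apply: le_trans (ler_norm _) _; apply: le_trans (ler_normB _ _) _.
rewrite mulr2n mulrDl mul1r.
apply: lerD; apply: hM => //; first exact: (admT_Y Y0 adm).
by case: adm => ->.
Qed.


Lemma Y_closed : closed Y.
Proof. exact: compact_closed (@norm_hausdorff _ _) cY. Qed.

Lemma H_closed : closed [set p : ('rV[R]_m * U0)%type | Y p.1 /\ U p.1 p.2].
Proof.
rewrite -[X in closed X]setCK; apply: open_closedC.
rewrite openE => -[y u] /= nH.
have [Yy|nYy] := pselect (Y y); last first.
  have oY : open (~` Y) by exact: closed_openC Y_closed.
  have : nbhs (y, u) ((~` Y) `*` [set: U0]).
    exists (~` Y, [set: U0]); last by [].
    by split; [exact: open_nbhs_nbhs|exact: filterT].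
  by apply: filterS => -[z v] /= [nYz _] [].
have nU : ~ U y u by move=> Uyu; apply: nH.
have cUy' : closed (U y) by exact: compact_closed (@metric_hausdorff _ _) (cUy Yy).
have : nbhs u (~` U y) by apply: open_nbhs_nbhs; split => //; exact: closed_openC.
move=> /nbhs_ballP [e /= e0 He].
pose d := e / 2.
have d0 : 0 < d by rewrite divr_gt0.
pose O := ~` closure (ball u d).
have oO : open O by apply: closed_openC; exact: closed_closure.
have UO : U y `<=` O.
  move=> v Uv clv; have := clv (ball v d) (nbhsx_ballx _ _ d0).
  move=> [w [buw bvw]].
  have := ball_triangle buw (ball_sym bvw).
  rewrite -splitr => /He; exact.
have := usc Yy oO UO => N1.
have : nbhs (y, u) ([set z | Y z -> U z `<=` O] `*` ball u d).
  exists ([set z | Y z -> U z `<=` O], ball u d); last by [].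
  by split; [exact: N1|exact: nbhsx_ballx].
apply: filterS => -[z v] /= [hz bv] [Yz Uzv].
by have := hz Yz v Uzv; apply; apply: subset_closure.
Qed.

Lemma G_eq : G = [set p | Y p.1 /\ U p.1 p.2] `&` (f @^-1` Y).
Proof.
apply/seteqP; split => -[y u] /=.
  by move=> [Yy [Uu Yf]].
by move=> [[Yy Uu] Yf].
Qed.

Lemma G_closed : closed G.
Proof.
rewrite G_eq; apply: closedI; first exact: H_closed.
by apply: preimage_closed; [move=> x _; exact: cf|exact: Y_closed].
Qed.


Local Notation Sp := ('rV[R]_m * U0)%type.
Local Notation BorSp := (g_sigma_algebraType (@open Sp)).

Lemma fst_cont : continuous (fun p : Sp => p.1).
Proof. by move=> [y u]; exact: cvg_fst. Qed.

Lemma G_meas : measurable (G : set BorSp).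
Proof.
rewrite -[G]setCK; apply: measurableC; apply: sub_sigma_algebra.
exact: closed_openC G_closed.
Qed.

Definition opc (F : Sp -> R) := forall O : set R, open O ->
  exists2 V : set Sp, open V & G `&` V = G `&` F @^-1` O.

Lemma opc_meas (F : Sp -> R) : opc F -> measurable_fun (G : set BorSp) (F : BorSp -> R).
Proof.
move=> hF; apply: (measurability _ (measurable_realfun.RGenOpens.measurableE R)).
move=> _ [_ [a [b ->] <-]].
have [V oV <-] := hF _ (@interval_open R (BRight a) (BLeft b) isT isT).
apply: measurableI; first exact: G_meas.
by apply: sub_sigma_algebra; exact: oV.
Qed.

Lemma opc_k : opc k.
Proof. by move=> O oO; exists (k @^-1` O) => //; exact: (continuousP _).1 ck _ oO. Qed.

Lemma opc_comp (g : Sp -> 'rV[R]_m) (phi : 'rV[R]_m -> R) :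
  continuous g -> (forall p, G p -> Y (g p)) -> contY Y phi ->
  opc (fun p => phi (g p)).
Proof.
move=> cg gY /continuousP cphi O oO.
have [V1 oV1 VD] := (open_subspaceP Y _).1 (cphi O oO).
exists (g @^-1` V1); first exact: (continuousP _).1 cg _ oV1.
apply/seteqP; split => p [Gp hp]; split => //=.
  have : (V1 `&` Y) (g p) by split => //; exact: gY.
  by rewrite VD => -[].
have : ((from_subspace Y phi @^-1` O) `&` Y) (g p) by split => //; exact: gY.
by rewrite -VD => -[].
Qed.

Lemma bnd_of (T : Type) (D : set T) (F : T -> R) (B : R) :
  (forall x, D x -> `|F x| <= B) -> [bounded F x | x in D].
Proof.
move=> hB; rewrite /bounded_near; near=> M => x Dx.
apply: le_trans (hB _ Dx) _; near: M; apply: nbhs_pinfty_ge.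
exact: num_real.
Unshelve. all: by end_near.
Qed.

Lemma int_of (mu : {measure set BorSp -> \bar R}) (F : Sp -> R) (B : R) :
  (mu G < +oo)%E -> opc F -> (forall p, G p -> `|F p| <= B) ->
  mu.-integrable (G : set BorSp) (EFin \o (F : BorSp -> R)).
Proof.
move=> muG oF hB; apply: measurable_bounded_integrable => //.
- exact: G_meas.
- exact: opc_meas.
- exact: bnd_of hB.
Qed.


Definition good (F : Sp -> R) :=
  measurable_fun (G : set BorSp) (F : BorSp -> R) /\
  exists B, forall p, G p -> `|F p| <= B.

Lemma goodD F H : good F -> good H -> good (fun p => F p + H p).
Proof.
move=> [mF [B1 h1]] [mH [B2 h2]]; split.
  exact: measurable_realfun.measurable_funD.
exists (B1 + B2) => p Gp; apply: le_trans (ler_normD _ _) _.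
by apply: lerD; [exact: h1|exact: h2].
Qed.

Lemma goodB F H : good F -> good H -> good (fun p => F p - H p).
Proof.
move=> [mF [B1 h1]] [mH [B2 h2]]; split.
  exact: measurable_realfun.measurable_funB.
exists (B1 + B2) => p Gp; apply: le_trans (ler_normB _ _) _.
by apply: lerD; [exact: h1|exact: h2].
Qed.

Lemma good_cst c : good (fun _ => c).
Proof. by split; [exact: measurable_cst|exists `|c|]. Qed.

Lemma goodZ c F : good F -> good (fun p => c * F p).
Proof.
move=> gF; have [mF [B h]] := gF; split.
  have mc : measurable_fun (G : set BorSp) (cst c : BorSp -> R) by exact: measurable_cst.
  exact: (measurable_realfun.measurable_funM mc mF).
exists (`|c| * B) => p Gp; rewrite normrM ler_wpM2l //; exact: h.
Qed.

Lemma good_k : good k.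
Proof.
split; first exact: opc_meas opc_k.
by exists K => p [Yp _]; exact: hK.
Qed.

Lemma good_comp (g : Sp -> 'rV[R]_m) (phi : 'rV[R]_m -> R) (B : R) :
  continuous g -> (forall p, G p -> Y (g p)) -> contY Y phi ->
  (forall y, Y y -> `|phi y| <= B) -> good (fun p => phi (g p)).
Proof.
move=> cg gY cphi hB; split; first by apply: opc_meas; exact: opc_comp.
by exists B => p Gp; apply: hB; exact: gY.
Qed.

Lemma G_Y1 p : G p -> Y p.1. Proof. by case. Qed.
Lemma G_Yf p : G p -> Y (f p). Proof. by case: p => y u [_ [_ ]]. Qed.

Lemma good_int (mu : {measure set BorSp -> \bar R}) F :
  (mu G < +oo)%E -> good F -> mu.-integrable (G : set BorSp) (EFin \o (F : BorSp -> R)).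
Proof.
move=> muG [mF [B hB]].
exact: (measurable_bounded_integrable G_meas muG mF (bnd_of hB)).
Qed.

Lemma muG (mu : {measure set BorSp -> \bar R}) :
  mu (~` (G : set BorSp)) = 0%E -> mu G = mu [set: BorSp].
Proof.
move=> h; have := measureU mu G_meas (measurableC G_meas) (setICr (G : set BorSp)).
rewrite setUv => ->.
rewrite -{1}(adde0 (mu G)); congr (_ + _)%E; exact/esym/h.
Qed.


Section Disc.
Variable al : R.
Hypothesis al0 : 0 < al.
Hypothesis al1 : al < 1.

Let al0' : 0 <= al. Proof. exact: ltW. Qed.
Let a1 : 0 < 1 - al. Proof. by rewrite subr_gt0. Qed.

Definition HS y0 := [set c | exists y u, admissible Y U f y0 y u /\
   c = Lser al (fun t => k (y t, u t))].
Definition Hinf y0 := inf (HS y0).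

Lemma hE y : h Y U f k al y = (1 - al) * Hinf y.
Proof. by []. Qed.

Lemma traj_bnd y0 y u : Y y0 -> admissible Y U f y0 y u ->
  forall t, `|k (y t, u t)| <= K.
Proof. by move=> Y0 adm t; apply: hK; exact: (G_Y1 (adm_G Y0 adm t)). Qed.

Lemma HS_ne y0 : Y y0 -> HS y0 !=set0.
Proof.
move=> Y0; have [y [u adm]] := exists_adm Y0.
by exists (Lser al (fun t => k (y t, u t))), y, u.
Qed.

Lemma HS_bnd y0 c : Y y0 -> HS y0 c -> `|c| <= K / (1 - al).
Proof.
move=> Y0 [y [u [adm ->]]]; apply: Lser_bnd => //; exact: traj_bnd Y0 adm.
Qed.

Lemma Hinf_le y0 c : Y y0 -> HS y0 c -> Hinf y0 <= c.
Proof.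
move=> Y0 Sc; apply: ge_inf => //; exists (- (K / (1 - al))) => x Sx.
by have := HS_bnd Y0 Sx; rewrite ler_norml => /andP[].
Qed.

Lemma Hinf_ge y0 x : Y y0 -> (forall c, HS y0 c -> x <= c) -> x <= Hinf y0.
Proof. by move=> Y0 hx; apply: lb_le_inf; [exact: HS_ne|exact: hx]. Qed.

Lemma Hinf_bnd y0 : Y y0 -> `|Hinf y0| <= K / (1 - al).
Proof.
move=> Y0; rewrite ler_norml; apply/andP; split.
  apply: Hinf_ge => // c Sc.
  by have := HS_bnd Y0 Sc; rewrite ler_norml => /andP[].
have [c Sc] := HS_ne Y0; apply: le_trans (Hinf_le Y0 Sc) _.
by have := HS_bnd Y0 Sc; rewrite ler_norml => /andP[].
Qed.

Lemma h_bnd y : Y y -> `|h Y U f k al y| <= K.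
Proof.
move=> Yy; rewrite hE normrM (gtr0_norm a1).
by rewrite -ler_pdivlMl // mulrC; exact: Hinf_bnd.
Qed.

Lemma Hinf_DP y u : G (y, u) -> Hinf y <= k (y, u) + al * Hinf (f (y, u)).
Proof.
move=> Gp; have [Yy [Ayu Yf]] := Gp.
rewrite -lerBlDl -ler_pdivrMl //.
apply: Hinf_ge => // c [z [v [[z0 adm] ->]]].
rewrite ler_pdivrMl // lerBlDl.
pose y' t := if t is t'.+1 then z t' else y.
pose u' t := if t is t'.+1 then v t' else u.
have adm' : admissible Y U f y y' u'.
  by split => // -[|t] /=; [rewrite z0|exact: adm].
apply: le_trans (Hinf_le Yy (_ : HS y _)) _.
  by exists y', u'; split; first exact: adm'.
rewrite (Lser_shift al0' al1 (B := K)) //.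
by move=> t; exact: (traj_bnd Yy adm').
Qed.

Lemma h_DP p : G p -> h Y U f k al p.1 <=
  (1 - al) * k p + al * h Y U f k al (f p).
Proof.
case: p => y u Gp /=; rewrite !hE.
have := Hinf_DP Gp; move=> hd.
have := ler_wpM2l (ltW a1) hd; rewrite mulrDr => hd'.
apply: le_trans hd' _; rewrite lerD2l mulrCA.
by [].
Qed.

Lemma disc_lower y0 mu psi eta (M : R) : Y y0 -> dualfeas y0 mu psi eta ->
  (forall z, Y z -> `|eta z| <= M) ->
  mu - 2%:R * M * (1 - al) <= h Y U f k al y0.
Proof.
move=> Y0 df hM; rewrite hE.
have M0 : 0 <= M by exact: le_trans (normr_ge0 _) (hM _ Y0).
have : mu / (1 - al) - 2%:R * M <= Hinf y0.
  apply: Hinf_ge => // c [y [u [adm ->]]].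
  pose z t := eta (y t).
  have hz : forall t, `|z t| <= M by move=> t; apply: hM; exact: adm_Y Y0 adm t.
  have hz' : forall t, `|z t.+1| <= M by move=> t; exact: hz.
  have hw : forall t, `|mu + (z t - z t.+1)| <= `|mu| + (M + M).
    move=> t; apply: le_trans (ler_normD _ _) _; rewrite lerD2l.
    by apply: le_trans (ler_normB _ _) _; apply: lerD.
  have := @Lser_le _ al al0' al1 (fun t => mu + (z t - z t.+1)) (fun t => k (y t, u t))
     _ _ hw (traj_bnd Y0 adm).
  rewrite (Lser_comb al0' al1 _ hz) => hle.
  have hle2 := hle (fun t => dual_step Y0 df (adm_admT t.+1 adm) (ltnSn t)).
  apply: le_trans hle2.
  rewrite (Lser_shift al0' al1 hz) -addrA lerD2l.
  have hb := Lser_bnd al0' al1 hz'.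
  have e : (1 - al) * (M / (1 - al)) = M by field; rewrite gt_eqF.
  have : (1 - al) * Lser al (fun t => z t.+1) <= M.
    rewrite -[X in _ <= X]e; apply: ler_wpM2l; first exact: ltW.
    by apply: le_trans (ler_norm _) hb.
  have := hz 0%N; rewrite ler_norml => /andP[hz0 _].
  nra.
move=> hi; have := ler_wpM2l (ltW a1) hi.
rewrite mulrBr [(1 - al) * (mu / _)]mulrC divfK ?gt_eqF //.
by rewrite mulrC.
Qed.

End Disc.


Lemma V_bnd T y : (0 < T)%N -> Y y -> `|V Y U f k T y| <= K.
Proof.
move=> T0 Yy; rewrite /V normrM normfV normr_nat.
rewrite ler_pdivrMl ?ltr0n //; exact: W_bnd.
Qed.

Lemma Rint_le_cst (mu : {measure set BorSp -> \bar R}) F c :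
  (mu G < +oo)%E -> good F -> (forall p, G p -> F p <= c) ->
  Rintegral mu (G : set BorSp) F <= c * fine (mu G).
Proof.
move=> muf gF h; rewrite -Rintegral_cst; last exact: G_meas.
apply: le_Rintegral => //; [exact: G_meas|exact: good_int|].
exact: good_int (good_cst c).
Qed.

Lemma Rint_ge_cst (mu : {measure set BorSp -> \bar R}) F c :
  (mu G < +oo)%E -> good F -> (forall p, G p -> c <= F p) ->
  c * fine (mu G) <= Rintegral mu (G : set BorSp) F.
Proof.
move=> muf gF h; rewrite -Rintegral_cst; last exact: G_meas.
apply: le_Rintegral => //; [exact: G_meas| |exact: good_int].
exact: good_int (good_cst c).
Qed.

Section Feas.
Variables (g xi : {measure set BorSp -> \bar R}) (y0 : 'rV[R]_m).
Hypothesis Y0 : Y y0.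
Hypothesis feas : LPfeasible Y U f y0 g xi.

Lemma g_G : g (G : set BorSp) = 1%E.
Proof. by have [[[gT gC] _] _] := feas; rewrite muG. Qed.

Lemma g_fin : (g (G : set BorSp) < +oo)%E.
Proof. by rewrite g_G ltry. Qed.

Lemma xi_fin : (xi (G : set BorSp) < +oo)%E.
Proof. by have [_ [[xT xC] _]] := feas; rewrite muG. Qed.

Lemma inv_g phi : contY Y phi ->
  Rintegral g (G : set BorSp) (fun p => phi (f p) - phi p.1) = 0.
Proof. by move=> cphi; have [[_ h] _] := feas; rewrite /Rintegral h. Qed.

Lemma lp_eq phi B : contY Y phi -> (forall y, Y y -> `|phi y| <= B) ->
  Rintegral g (G : set BorSp) (fun p => phi y0 - phi p.1) +
  Rintegral xi (G : set BorSp) (fun p => phi (f p) - phi p.1) = 0.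
Proof.
move=> cphi hB; have [_ [_ h]] := feas; have := congr1 fine (h phi cphi).
rewrite fineD //.
- apply: integrable_fin_num; first exact: G_meas.
  apply: good_int; first exact: g_fin.
  exact: goodB (good_cst _) (good_comp fst_cont G_Y1 cphi hB).
- apply: integrable_fin_num; first exact: G_meas.
  apply: good_int; first exact: xi_fin.
  exact: goodB (good_comp cf G_Yf cphi hB) (good_comp fst_cont G_Y1 cphi hB).
Qed.



Section Cesaro.
Hypothesis contV : forall T, (1 < T)%N -> contY Y (V Y U f k T).

Let VT T := V Y U f k T.

Lemma good1 T : (1 < T)%N -> good (fun p => VT T p.1).
Proof.
move=> T1; apply: (good_comp fst_cont G_Y1 (contV T1)) => y Yy.
by apply: V_bnd => //; exact: ltnW.
Qed.

Lemma goodf T : (1 < T)%N -> good (fun p => VT T (f p)).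
Proof.
move=> T1; apply: (good_comp cf G_Yf (contV T1)) => y Yy.
by apply: V_bnd => //; exact: ltnW.
Qed.

Let a T := Rintegral g (G : set BorSp) (fun p => VT T p.1).
Let Ik := Rintegral g (G : set BorSp) k.

Lemma ces_step T : (1 < T)%N -> T.+1%:R * a T.+1 <= Ik + T%:R * a T.
Proof.
move=> T1; have T1' : (1 < T.+1)%N by exact: ltnW.
have mG := G_meas; have gf := g_fin.
have hpt : forall p, G p -> T.+1%:R * VT T.+1 p.1 <=
    k p + T%:R * VT T p.1 + T%:R * (VT T (f p) - VT T p.1).
  move=> [y u] Gp /=; rewrite /VT V_W //.
  have -> : k (y, u) + T%:R * V Y U f k T y + T%:R * (V Y U f k T (f (y, u)) - V Y U f k T y)
     = k (y, u) + T%:R * V Y U f k T (f (y, u)) by ring.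
  rewrite V_W; last exact: ltnW.
  exact: W_DP.
have := le_Rintegral mG (good_int gf (goodZ T.+1%:R (good1 T1')))
  (good_int gf (goodD (goodD good_k (goodZ T%:R (good1 T1)))
     (goodZ T%:R (goodB (goodf T1) (good1 T1))))) hpt.
rewrite RintegralZl //; last exact: good_int gf (good1 T1').
rewrite RintegralD //; last 2 first.
- exact: good_int gf (goodD good_k (goodZ T%:R (good1 T1))).
- exact: good_int gf (goodZ T%:R (goodB (goodf T1) (good1 T1))).
rewrite RintegralD //; last 2 first.
- exact: good_int gf good_k.
- exact: good_int gf (goodZ T%:R (good1 T1)).
rewrite RintegralZl //; last exact: good_int gf (good1 T1).
rewrite RintegralZl //; last exact: good_int gf (goodB (goodf T1) (good1 T1)).
by rewrite inv_g ?mulr0 ?addr0 //; exact: contV.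
Qed.

Lemma ces_a n : (n.+2)%:R * (a n.+2 - Ik) <= 2%:R * (a 2 - Ik).
Proof.
elim: n => [|n IH] //.
have h := ces_step (T := n.+2) isT.
have e : (n.+3)%:R = (n.+2)%:R + 1 :> R by rewrite mulrSr.
rewrite e; apply: le_trans IH; nra.
Qed.

Lemma V_diff T p : (0 < T)%N -> G p ->
  T%:R * (VT T p.1 - VT T (f p)) <= 2%:R * K.
Proof.
case: T => // n _; case: p => y u Gp /=.
rewrite mulrBr /VT !V_W //.
have h1 := W_DP n Gp.
have h2 := W_trunc n (G_Yf Gp).
have h3 := kG_le Gp.
lra.
Qed.

Lemma ces_upper T : (1 < T)%N ->
  T%:R * (VT T y0 - Ik) <= 2%:R * (a 2 - Ik) + 2%:R * K * fine (xi (G : set BorSp)).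
Proof.
move=> T1; have T0 : (0 < T)%N by exact: ltnW.
have mG := G_meas; have gf := g_fin; have xf := xi_fin.
have := lp_eq (contV T1) (fun y Yy => V_bnd T0 Yy).
rewrite RintegralB //; last 2 first.
- exact: good_int gf (good_cst _).
- exact: good_int gf (good1 T1).
rewrite Rintegral_cst // g_G /= mulr1 => hlp.
have hJ : - (2%:R * K / T%:R) * fine (xi (G : set BorSp)) <=
    Rintegral xi (G : set BorSp) (fun p => VT T (f p) - VT T p.1).
  apply: Rint_ge_cst => //; first exact: goodB (goodf T1) (good1 T1).
  move=> p Gp; rewrite lerNl opprB.
  rewrite ler_pdivlMr ?ltr0n // mulrC.
  exact: V_diff.
have ha : T%:R * (a T - Ik) <= 2%:R * (a 2 - Ik).
  by case: T T1 {T0 hlp hJ} => [|[|n]] // _; exact: ces_a.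
rewrite mulNr in hJ.
have xi0 : 0 <= fine (xi (G : set BorSp)) by apply: fine_ge0; exact: measure_ge0.
have Tp : 0 < T%:R :> R by rewrite ltr0n.
have : VT T y0 <= a T + (2%:R * K / T%:R) * fine (xi (G : set BorSp)).
  rewrite /a /VT in hJ *; lra.
move=> hV.
have e : T%:R * (2%:R * K / T%:R * fine (xi (G : set BorSp))) =
    2%:R * K * fine (xi (G : set BorSp)).
  by field; rewrite gt_eqF.
have hV' := ler_wpM2l (ltW Tp) hV.
rewrite mulrDr e in hV'.
move: ha; rewrite !mulrBr; lra.
Qed.

End Cesaro.



Section DiscI.
Variable al : R.
Hypothesis al0 : 0 < al.
Hypothesis al1 : al < 1.
Hypothesis contH : contY Y (h Y U f k al).

Let H := h Y U f k al.
Let Ik := Rintegral g (G : set BorSp) k.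

Lemma hb y : Y y -> `|H y| <= K.
Proof. exact: h_bnd. Qed.

Lemma goodh1 : good (fun p => H p.1).
Proof. exact: good_comp fst_cont G_Y1 contH hb. Qed.

Lemma goodhf : good (fun p => H (f p)).
Proof. exact: good_comp cf G_Yf contH hb. Qed.

Lemma disc_upper : H y0 - Ik <= (1 - al) * (2%:R * K * fine (xi (G : set BorSp))).
Proof.
have mG := G_meas; have gf := g_fin; have xf := xi_fin.
have a1 : 0 < 1 - al by rewrite subr_gt0.
have hpt : forall p, G p -> H p.1 <=
    (1 - al) * k p + al * H p.1 + al * (H (f p) - H p.1).
  move=> p Gp; have := h_DP al0 al1 Gp; rewrite -/H => hd.
  apply: le_trans hd _; rewrite le_eqVlt; apply/orP; left; apply/eqP; ring.
have := le_Rintegral mG (good_int gf goodh1)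
  (good_int gf (goodD (goodD (goodZ (1 - al) good_k) (goodZ al goodh1))
     (goodZ al (goodB goodhf goodh1)))) hpt.
rewrite RintegralD //; last 2 first.
- exact: good_int gf (goodD (goodZ (1 - al) good_k) (goodZ al goodh1)).
- exact: good_int gf (goodZ al (goodB goodhf goodh1)).
rewrite RintegralD //; last 2 first.
- exact: good_int gf (goodZ (1 - al) good_k).
- exact: good_int gf (goodZ al goodh1).
rewrite RintegralZl //; last exact: good_int gf good_k.
rewrite RintegralZl //; last exact: good_int gf goodh1.
rewrite RintegralZl //; last exact: good_int gf (goodB goodhf goodh1).
rewrite inv_g // mulr0 addr0 => hIh.
have hIk : Rintegral g (G : set BorSp) (fun p => H p.1) <= Ik.
  rewrite -(ler_pM2l a1); rewrite /Ik; nra.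
have := lp_eq contH hb.
rewrite RintegralB //; last 2 first.
- exact: good_int gf (good_cst _).
- exact: good_int gf goodh1.
rewrite Rintegral_cst // g_G /= mulr1 => hlp.
have hJ : - ((1 - al) * (2%:R * K)) * fine (xi (G : set BorSp)) <=
    Rintegral xi (G : set BorSp) (fun p => H (f p) - H p.1).
  apply: Rint_ge_cst => //; first exact: goodB goodhf goodh1.
  move=> p Gp; rewrite lerNl opprB.
  have hd := h_DP al0 al1 Gp; rewrite -/H in hd.
  have hk := kG_le Gp.
  have := hb (G_Yf Gp); rewrite ler_norml => /andP[hf _].
  nra.
rewrite mulNr in hJ.
move: hJ hlp hIk; rewrite /H /Ik mulrA; lra.
Qed.

End DiscI.

End Feas.


Lemma contY_bnd phi : contY Y phi -> exists M, 0 <= M /\ forall y, Y y -> `|phi y| <= M.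
Proof.
move=> cphi.
have := @continuous_compact _ _ phi _ cphi cY.
move=> /compact_bounded [M [_ HM]].
exists (`|M| + 1); split; first by rewrite addr_ge0.
move=> y Yy; apply: (HM (`|M| + 1)); first by rewrite (le_lt_trans (ler_norm M))// ltrDl.
by exists y.
Qed.

Lemma ces_lower T y0 mu psi eta (M : R) : Y y0 -> dualfeas y0 mu psi eta ->
  (forall z, Y z -> `|eta z| <= M) -> (0 < T)%N ->
  - (2%:R * M) <= T%:R * (V Y U f k T y0 - mu).
Proof.
move=> Y0 df hM T0; rewrite mulrBr V_W //.
have : T%:R * mu - 2%:R * M <= W T y0.
  apply: W_ge => // c [y [u [adm ->]]]; exact: dual_sum Y0 df hM adm.
lra.
Qed.

Definition DS y0 := [set mu : R | exists psi eta,
     contY Y psi /\ contY Y eta /\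
     forall p, Gset Y U f p ->
       0 <= k p + psi y0 - psi p.1 + eta (f p) - eta p.1 - mu /\
       0 <= psi (f p) - psi p.1].

Lemma DS_le y0 mu : Y y0 -> DS y0 mu -> mu <= K.
Proof.
move=> Y0 [psi [eta [cpsi [ceta df]]]].
have [M [M0 hM]] := contY_bnd ceta.
rewrite leNgt; apply/negP => muK.
have d0 : 0 < mu - K by rewrite subr_gt0.
pose T := (Num.Def.trunc (2%:R * M / (mu - K))).+1.
have hT : 2%:R * M / (mu - K) < T%:R by exact: truncnS_gt.
have h1 := ces_lower Y0 df hM (ltn0Sn _ : (0 < T)%N).
have h2 := V_bnd (ltn0Sn _ : (0 < T)%N) Y0.
rewrite ler_norml in h2; case/andP: h2 => _ h2.
have Tp : 0 < T%:R :> R by rewrite ltr0n.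
rewrite ltr_pdivrMr // in hT.
nra.
Qed.

Lemma DS_K y0 : DS y0 (- K).
Proof.
exists (fun _ => 0), (fun _ => 0); split; first by apply: continuous_subspaceT => x; exact: cst_continuous.
split; first by apply: continuous_subspaceT => x; exact: cst_continuous.
move=> p Gp; split; last by rewrite subrr.
have := kG_ge Gp; lra.
Qed.

Lemma dstar_fin y0 : Y y0 -> exists r, d_star Y U f k y0 = r%:E.
Proof.
move=> Y0; exists (fine (d_star Y U f k y0)); rewrite fineK //.
rewrite fin_numE; apply/andP; split.
  rewrite gt_eqF //; apply: (@lt_le_trans _ _ (- K)%:E); first exact: ltNyr.
  by apply: ereal_sup_ubound; exists (- K) => //; exact: DS_K.
rewrite lt_eqF //; apply: (@le_lt_trans _ _ K%:E); last exact: ltry.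
by apply: ge_ereal_sup => _ [mu Dmu <-]; rewrite lee_fin; exact: DS_le Y0 Dmu.
Qed.


Lemma part1 y0 : Y y0 -> d_star Y U f k y0 = k_star Y U f k y0 ->
  (forall T, (1 < T)%N -> {within Y, continuous (V Y U f k T)}) ->
  (fun T : nat => (V Y U f k T y0)%:E) @ \oo --> d_star Y U f k y0.
Proof.
move=> Y0 dk contV.
have [r dr] := dstar_fin Y0.
rewrite dr; apply: cvg_EFin; first by near=> T.
apply/cvgrPdist_le => e e0.
have e2 : 0 < e / 2 by rewrite divr_gt0.
have : ((r - e/2)%:E < d_star Y U f k y0)%E by rewrite dr lte_fin ltrBlDr ltrDl.
move=> /ereal_sup_gt [_ [mu Dmu <-]]; rewrite lte_fin => hmu.
have [psi [eta [cpsi [ceta df]]]] := Dmu.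
have [M [M0 hM]] := contY_bnd ceta.
have : (k_star Y U f k y0 < (r + e/2)%:E)%E by rewrite -dk dr lte_fin ltrDl.
move=> /ereal_inf_lt [_ [g [xi feas] <-]] hI.
have hIk : Rintegral g (G : set BorSp) k < r + e/2.
  have fin : (\int[g]_(p in (G : set BorSp)) (k p)%:E)%E \is a fin_num.
    apply: integrable_fin_num; first exact: G_meas.
    exact: good_int (g_fin feas) good_k.
  by rewrite -lte_fin /Rintegral fineK.
have [C hC] : exists C, forall T, (1 < T)%N ->
    T%:R * (V Y U f k T y0 - Rintegral g (G : set BorSp) k) <= C.
  exists (2%:R * (Rintegral g (G : set BorSp) (fun p => V Y U f k 2 p.1) -
    Rintegral g (G : set BorSp) k) + 2%:R * K * fine (xi (G : set BorSp))).
  by move=> T T1; have := ces_upper feas contV T1.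
pose N := (Num.Def.trunc ((4 * M + 2 * `|C|) / e)).+2.
near=> T.
have hT : (N <= T)%N by near: T; exact: nbhs_infty_ge.
have T1 : (1 < T)%N by apply: leq_trans hT.
have Tp : 0 < T%:R :> R by rewrite ltr0n; exact: ltnW.
apply: (final_est Tp e0 M0 (ces_lower Y0 df hM (ltnW T1)) (hC T T1) hmu hIk).
rewrite [e * _]mulrC -ler_pdivrMr //.
apply: le_trans (ltW (truncnS_gt _)) _.
by rewrite ler_nat; apply: leq_trans hT.
Unshelve. all: by end_near.
Qed.

Lemma part2 y0 : Y y0 -> d_star Y U f k y0 = k_star Y U f k y0 ->
  (forall alpha : R, 0 < alpha < 1 -> {within Y, continuous (h Y U f k alpha)}) ->
  (h Y U f k alpha y0)%:E @[alpha --> 1^'-] --> d_star Y U f k y0.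
Proof.
move=> Y0 dk contH.
have [r dr] := dstar_fin Y0.
rewrite dr; apply: cvg_EFin; first by near=> T.
apply/cvgrPdist_le => e e0.
have e2 : 0 < e / 2 by rewrite divr_gt0.
have : ((r - e/2)%:E < d_star Y U f k y0)%E by rewrite dr lte_fin ltrBlDr ltrDl.
move=> /ereal_sup_gt [_ [mu Dmu <-]]; rewrite lte_fin => hmu.
have [psi [eta [cpsi [ceta df]]]] := Dmu.
have [M [M0 hM]] := contY_bnd ceta.
have : (k_star Y U f k y0 < (r + e/2)%:E)%E by rewrite -dk dr lte_fin ltrDl.
move=> /ereal_inf_lt [_ [g [xi feas] <-]] hI.
have hIk : Rintegral g (G : set BorSp) k < r + e/2.
  have fin : (\int[g]_(p in (G : set BorSp)) (k p)%:E)%E \is a fin_num.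
    apply: integrable_fin_num; first exact: G_meas.
    exact: good_int (g_fin feas) good_k.
  by rewrite -lte_fin /Rintegral fineK.
set C := 2%:R * K * fine (xi (G : set BorSp)).
set X := 4 * M + 2 * `|C|.
have X0 : 0 <= X by rewrite /X addr_ge0 ?mulr_ge0.
set d := e / (X + 1).
have d0 : 0 < d by rewrite divr_gt0 // ltr_wpDl.
near=> a.
have a0 : 0 < a by near: a; exact: nbhs_left_gt ltr01.
have a1 : a < 1 by near: a; exact: nbhs_left_lt.
have ad : 1 - d < a by near: a; apply: nbhs_left_gt; rewrite ltrBlDr ltrDl.
have ch : contY Y (h Y U f k a) by apply: contH; rewrite a0 a1.
have s0 : 0 < 1 - a by rewrite subr_gt0.
apply: (final_est2 s0 e0 M0 (disc_lower a0 a1 Y0 df hM) (disc_upper feas a0 a1 ch) hmu hIk).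
have : (1 - a) * X <= d * X by rewrite ler_wpM2r // ltW // ltrBlDl addrC -ltrBlDl.
move=> h1; apply: le_trans h1 _.
rewrite /d mulrAC ler_pdivrMr ?ltr_wpDl //; nra.
Unshelve. all: by end_near.
Qed.

End Main.

Theorem proposition4p1 (R : realType) (m : nat) (U0 : pmetricType R)
  (Y : set 'rV[R]_m) (U : 'rV[R]_m -> set U0)
  (f : ('rV[R]_m * U0)%type -> 'rV[R]_m) (k : ('rV[R]_m * U0)%type -> R)
  (y0 : 'rV[R]_m) :
  Y !=set0 -> compact Y ->
  compact [set: U0] ->
  usc_on Y U -> (forall y, Y y -> compact (U y)) ->
  continuous f -> continuous k ->
  (forall y, Y y -> Aset Y U f y !=set0) ->
  Y y0 ->
  d_star Y U f k y0 = k_star Y U f k y0 ->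
  ((forall T : nat, (1 < T)%N -> {within Y, continuous (V Y U f k T)}) ->
     (fun T : nat => (V Y U f k T y0)%:E) @ \oo --> d_star Y U f k y0)
  /\
  ((forall alpha : R, 0 < alpha < 1 -> {within Y, continuous (h Y U f k alpha)}) ->
     (h Y U f k alpha y0)%:E @[alpha --> 1^'-] --> d_star Y U f k y0).
Proof.
move=> _ cY cU0 usc cUy cf ck Ane Y0 dk.
have [K [K0 hK]] := exK cY cU0 ck.
split => hc.
- by apply: part1; first [exact: hK | eassumption].
- by apply: part2; first [exact: hK | eassumption].
Qed.
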